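(* Let $|\phi_{ABC}\rangle$ be a pure three-qubit state. If at least one of the following holds: (i) $|\vec a|^2>\frac{|\vec b|^2+|\vec c|^2}{2}$ and $|\vec b|^2>\frac{|\vec a|^2+|\vec c|^2}{2}$; (ii) $|\vec a|^2>\frac{|\vec b|^2+|\vec c|^2}{2}$ and $|\vec c|^2>\frac{|\vec a|^2+|\vec b|^2}{2}$; (iii) $|\vec b|^2>\frac{|\vec a|^2+|\vec c|^2}{2}$ and $|\vec c|^2>\frac{|\vec a|^2+|\vec b|^2}{2}$, then $|\phi_{ABC}\rangle$ is genuinely tripartite entangled, i.e. it is not a product $|\chi\rangle\otimes|\eta\rangle$ with respect to any bipartition of the three qubits into one qubit versus the other two.
   Context: $\vec a,\vec b,\vec c\in\mathbb R^3$ are the Bloch vectors of the single-qubit reduced states of $|\phi_{ABC}\rangle$: $a_k=\mathrm{Tr}[\rho_A\sigma_k]$, $b_k=\mathrm{Tr}[\rho_B\sigma_k]$, $c_k=\mathrm{Tr}[\rho_C\sigma_k]$, with $\sigma_k$ the Pauli matrices. *)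

(* Defs.v *)
From HB Require Import structures.
From mathcomp Require Import all_boot all_order all_algebra.
From mathcomp Require Import complex.
Set Implicit Arguments. Unset Strict Implicit. Unset Printing Implicit Defensive.
Import Order.TTheory GRing.Theory Num.Theory.
Local Open Scope ring_scope.

Section QubitDefs.
Variable R : rcfType.
Local Notation C := R[i].

(* A (not necessarily normalized) three-qubit vector in the computational
   basis: psi i j k = <ijk|phi>, i for qubit A, j for B, k for C. *)
Definition state3 := 'I_2 -> 'I_2 -> 'I_2 -> C.

Definition normalized (psi : state3) : Prop :=
  \sum_(i < 2) \sum_(j < 2) \sum_(k < 2) `|psi i j k| ^+ 2 = 1.

(* Pauli matrices sigma_1 = X, sigma_2 = Y, sigma_3 = Z (indexed 0,1,2). *)
Definition pauli (m : 'I_3) : 'M[C]_2 :=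
  \matrix_(r < 2, s < 2)
    if val m == 0%N then (if r != s then 1 else 0)
    else if val m == 1%N then
      (if (val r == 0%N) && (val s == 1%N) then - 'i%C
       else if (val r == 1%N) && (val s == 0%N) then 'i%C else 0)
    else (if r == s then (if val r == 0%N then 1 else -1) else 0).

Definition rhoA (psi : state3) : 'M[C]_2 :=
  \matrix_(i < 2, i' < 2) \sum_(j < 2) \sum_(k < 2) psi i j k * conjc (psi i' j k).
Definition rhoB (psi : state3) : 'M[C]_2 :=
  \matrix_(j < 2, j' < 2) \sum_(i < 2) \sum_(k < 2) psi i j k * conjc (psi i j' k).
Definition rhoC (psi : state3) : 'M[C]_2 :=
  \matrix_(k < 2, k' < 2) \sum_(i < 2) \sum_(j < 2) psi i j k * conjc (psi i j k').

Definition bloch (rho : 'M[C]_2) (m : 'I_3) : C := \tr (rho *m pauli m).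

Definition normsq (v : 'I_3 -> C) : C := \sum_(m < 3) `|v m| ^+ 2.

Definition product_A_BC (psi : state3) : Prop :=
  exists (chi : 'I_2 -> C) (eta : 'I_2 -> 'I_2 -> C),
    forall i j k, psi i j k = chi i * eta j k.
Definition product_B_AC (psi : state3) : Prop :=
  exists (chi : 'I_2 -> C) (eta : 'I_2 -> 'I_2 -> C),
    forall i j k, psi i j k = chi j * eta i k.
Definition product_C_AB (psi : state3) : Prop :=
  exists (chi : 'I_2 -> C) (eta : 'I_2 -> 'I_2 -> C),
    forall i j k, psi i j k = chi k * eta i j.

Definition genuinely_tripartite_entangled (psi : state3) : Prop :=
  ~ product_A_BC psi /\ ~ product_B_AC psi /\ ~ product_C_AB psi.

End QubitDefs.

(* Main.v *)
Require Import Defs.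
From HB Require Import structures.
From mathcomp Require Import all_boot all_order all_algebra.
From mathcomp Require Import complex ring.
Import Order.TTheory GRing.Theory Num.Theory.
Local Open Scope ring_scope.
Local Open Scope complex_scope.

Section S.
Variable R : rcfType.
Local Notation C := R[i].
Definition i0 : 'I_2 := @Ordinal 2 0 isT.
Definition i1 : 'I_2 := @Ordinal 2 1 isT.

Lemma sum2 (F : 'I_2 -> C) : \sum_(i < 2) F i = F i0 + F i1.
Proof.
rewrite big_ord_recl big_ord1; congr (_ + _); congr F; exact: val_inj.
Qed.
Lemma sum3 (F : 'I_3 -> C) : \sum_(i < 3) F i = F (@Ordinal 3 0 isT) + F (@Ordinal 3 1 isT) + F (@Ordinal 3 2 isT).
Proof.
rewrite big_ord_recl big_ord_recl big_ord1 addrA; congr (_ + _ + _); congr F; exact: val_inj.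
Qed.

Lemma normsq_bloch (rho : 'M[C]_2) :
  normsq (bloch rho) = (rho i0 i0 - rho i1 i1) * (conjc (rho i0 i0 - rho i1 i1))
     + 2%:R * (rho i0 i1 * (conjc (rho i0 i1))) + 2%:R * (rho i1 i0 * (conjc (rho i1 i0))).
Proof.
rewrite /normsq /bloch sum3 !sqr_normc.
rewrite /mxtrace !sum2 !mxE !sum2 !mxE /=.
rewrite !(mulr0, mulr1, add0r, addr0, mulrN1, mulrN, rmorphD, rmorphN, rmorphM) /=.
have ci : (-1)*i = - 'i :> C by apply/eqP; rewrite eq_complex /= oppr0 !eqxx.
have e : 'i * 'i = -1 :> C by rewrite -expr2 sqr_i.
have h : forall a b a' b' : C, (a*'i - b*'i) * (a'*(- 'i) - b'*(- 'i)) = (a-b)*(a'-b').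
  move=> a b a' b'; transitivity ((a-b)*(a'-b') * -('i*'i)); first by ring.
  by rewrite e opprK mulr1.
rewrite ci h; ring.
Qed.

Lemma cK (x : C) : (conjc (conjc x)) = x.
Proof. by case: x => a b; rewrite /= opprK. Qed.

Lemma cD (x y : C) : (conjc (x + y)) = (conjc x) + (conjc y).
Proof. exact: rmorphD. Qed.
Lemma cM (x y : C) : (conjc (x * y)) = (conjc x) * (conjc y).
Proof. exact: rmorphM. Qed.
Lemma cB (x y : C) : (conjc (x - y)) = (conjc x) - (conjc y).
Proof. exact: rmorphB. Qed.
Lemma cN (x : C) : (conjc (- x)) = - (conjc x).
Proof. exact: rmorphN. Qed.

Definition f (h00 h01 h10 h11 : C) :=
  (h00 - h11) * (conjc (h00 - h11)) + 2%:R * (h01 * (conjc h01)) + 2%:R * (h10 * (conjc h10)).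

Lemma normsq_f (rho : 'M[C]_2) :
  normsq (bloch rho) = f (rho i0 i0) (rho i0 i1) (rho i1 i0) (rho i1 i1).
Proof. by rewrite normsq_bloch. Qed.

Lemma f_scale s a b c d : f (s*a) (s*b) (s*c) (s*d) = s * (conjc s) * f a b c d.
Proof. rewrite /f !(cD, cM, cB, cN) /=; ring. Qed.

Definition Grow (e : 'I_2 -> 'I_2 -> C) j j' := e j i0 * (conjc (e j' i0)) + e j i1 * (conjc (e j' i1)).
Definition Gcol (e : 'I_2 -> 'I_2 -> C) k k' := e i0 k * (conjc (e i0 k')) + e i1 k * (conjc (e i1 k')).
Definition Nn (e : 'I_2 -> 'I_2 -> C) := Grow e i0 i0 + Grow e i1 i1.
Definition Pp (c : 'I_2 -> C) := c i0 * (conjc (c i0)) + c i1 * (conjc (c i1)).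
Definition dd (e : 'I_2 -> 'I_2 -> C) := e i0 i0 * e i1 i1 - e i0 i1 * e i1 i0.

Lemma f_rowcol e : f (Grow e i0 i0) (Grow e i0 i1) (Grow e i1 i0) (Grow e i1 i1)
  = f (Gcol e i0 i0) (Gcol e i0 i1) (Gcol e i1 i0) (Gcol e i1 i1).
Proof. rewrite /f /Grow /Gcol !(cD, cM, cB, cN, cK) /=; ring. Qed.

Lemma f_row e : f (Grow e i0 i0) (Grow e i0 i1) (Grow e i1 i0) (Grow e i1 i1)
  = Nn e * Nn e - 4%:R * (dd e * (conjc (dd e))).
Proof. rewrite /f /Nn /dd /Grow !(cD, cM, cB, cN, cK) /=; ring. Qed.

Lemma f_pure c : f (c i0 * (conjc (c i0))) (c i0 * (conjc (c i1))) (c i1 * (conjc (c i0))) (c i1 * (conjc (c i1)))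
  = Pp c * Pp c.
Proof. rewrite /f /Pp !(cD, cM, cB, cN, cK) /=; ring. Qed.

Lemma Nn_conj e : (conjc (Nn e)) = Nn e.
Proof. rewrite /Nn /Grow !(cD, cM, cK) /=; ring. Qed.
Lemma Pp_conj c : (conjc (Pp c)) = Pp c.
Proof. rewrite /Pp !(cD, cM, cK) /=; ring. Qed.
Lemma Pp_ge0 c : 0 <= Pp c.
Proof. by rewrite /Pp addr_ge0 // mulcJ_ge0. Qed.


Lemma key (X Y Z : 'M[C]_2) chi eta :
  (forall i i', X i i' = Nn eta * (chi i * conjc (chi i'))) ->
  (forall i i', Y i i' = Pp chi * Grow eta i i') ->
  (forall i i', Z i i' = Pp chi * Gcol eta i i') ->
  normsq (bloch Y) = normsq (bloch Z) /\ normsq (bloch Y) <= normsq (bloch X).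
Proof.
move=> HX HY HZ; rewrite !normsq_f !HX !HY !HZ !f_scale f_rowcol; split => //.
rewrite -f_rowcol f_row f_pure Nn_conj Pp_conj -subr_ge0.
set P := Pp chi; set N := Nn eta; set d := dd eta.
have -> : N * N * (P * P) - P * P * (N * N - 4%:R * (d * conjc d)) =
   4%:R * (P * P) * (d * conjc d) by ring.
apply: mulr_ge0; [apply: mulr_ge0; [exact: ler0n | apply: mulr_ge0; exact: Pp_ge0] | exact: mulcJ_ge0].
Qed.

Lemma L1 (x y : C) : y <= x -> (x + y) / 2%:R < y -> False.
Proof.
move=> hle; rewrite ltr_pdivrMr ?ltr0n // mulr_natr mulr2n ltrD2r => hlt.
by move: (lt_le_trans hlt hle); rewrite ltxx.
Qed.
Lemma L2 (x y : C) : y <= x -> (y + x) / 2%:R < y -> False.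
Proof. by rewrite addrC; apply: L1. Qed.


Ltac ent H := move=> ? ?; rewrite mxE !sum2 !H !cM /Nn /Pp /Grow /Gcol; ring.

Lemma caseA (psi : state3 R) : product_A_BC psi ->
  normsq (bloch (rhoB psi)) = normsq (bloch (rhoC psi)) /\
  normsq (bloch (rhoB psi)) <= normsq (bloch (rhoA psi)).
Proof. move=> [chi [eta H]]; apply: (key _ _ _ chi eta); ent H. Qed.

Lemma caseB (psi : state3 R) : product_B_AC psi ->
  normsq (bloch (rhoA psi)) = normsq (bloch (rhoC psi)) /\
  normsq (bloch (rhoA psi)) <= normsq (bloch (rhoB psi)).
Proof. move=> [chi [eta H]]; apply: (key _ _ _ chi eta); ent H. Qed.

Lemma caseC (psi : state3 R) : product_C_AB psi ->
  normsq (bloch (rhoA psi)) = normsq (bloch (rhoB psi)) /\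
  normsq (bloch (rhoA psi)) <= normsq (bloch (rhoC psi)).
Proof. move=> [chi [eta H]]; apply: (key _ _ _ chi eta); ent H. Qed.

End S.

Local Close Scope complex_scope.

Theorem theorem9 (R : rcfType) (psi : state3 R) :
  normalized psi ->
  let a2 := normsq (bloch (rhoA psi)) in
  let b2 := normsq (bloch (rhoB psi)) in
  let c2 := normsq (bloch (rhoC psi)) in
  (a2 > (b2 + c2) / 2 /\ b2 > (a2 + c2) / 2) \/
  (a2 > (b2 + c2) / 2 /\ c2 > (a2 + b2) / 2) \/
  (b2 > (a2 + c2) / 2 /\ c2 > (a2 + b2) / 2) ->
  genuinely_tripartite_entangled psi.
Proof.
move=> _ a2 b2 c2 Hc.
have HA : product_A_BC psi -> b2 = c2 /\ b2 <= a2 := @caseA R psi.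
have HB : product_B_AC psi -> a2 = c2 /\ a2 <= b2 := @caseB R psi.
have HC : product_C_AB psi -> a2 = b2 /\ a2 <= c2 := @caseC R psi.
clearbody a2 b2 c2.
split; [|split].
- move=> /HA [E Le]; subst b2.
  by case: Hc => [[_ h]|[[_ h]|[h _]]]; first [exact: (L1 _ _ _ Le h) | exact: (L2 _ _ _ Le h)].
- move=> /HB [E Le]; subst a2.
  by case: Hc => [[h _]|[[h _]|[_ h]]]; first [exact: (L1 _ _ _ Le h) | exact: (L2 _ _ _ Le h)].
- move=> /HC [E Le]; subst a2.
  by case: Hc => [[h _]|[[h _]|[h _]]]; first [exact: (L1 _ _ _ Le h) | exact: (L2 _ _ _ Le h)].
Qed.
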